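(* Let $\vec{\mathcal G}=([n],E)$ be a directed graph with $m=|E|$ edges in which every vertex has at least one outgoing edge and which has at least one directed cycle. For weights $r\in\mathbb R^m$ let $\lambda(r)$ denote the minimum, over all directed cycles $C$ of $\vec{\mathcal G}$, of the mean weight of $C$. Then for every edge $(i,j)\in E$ and every $r_{-ij}\in\mathbb R^{m-1}$, the function $\mathbb R\ni x\mapsto \lambda(x,r_{-ij})$ is continuous, piecewise affine, and has at most $n$ break points.
   Context: The mean weight of a directed cycle is the sum of the weights of its edges divided by its number of edges. For $r\in\mathbb R^m$ and an edge $(i,j)$, $r_{-ij}\in\mathbb R^{m-1}$ is $r$ with the $ij$-th coordinate removed, and $(x,r_{-ij})\in\mathbb R^m$ is $r$ with the $ij$-th coordinate replaced by $x$. *)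

(* Defs.v *)
From HB Require Import structures.
From mathcomp Require Import all_boot all_order all_algebra.
From mathcomp Require Import all_classical all_reals all_analysis.
Set Implicit Arguments. Unset Strict Implicit. Unset Printing Implicit Defensive.
Import Order.TTheory GRing.Theory Num.Theory.
Import numFieldNormedType.Exports.
Local Open Scope classical_set_scope.
Local Open Scope ring_scope.

(* A directed graph on vertex set [n] = 'I_n is given by its edge set
   E : {set 'I_n * 'I_n}.  Edge weights are a function r on pairs; only
   the values r e for e \in E matter. *)

Definition dcycle (n : nat) (E : {set 'I_n * 'I_n}) (c : seq 'I_n) : Prop :=
  [/\ c != [::], uniq c & cycle (fun u v => (u, v) \in E) c].

Definition cycle_edges (n : nat) (c : seq 'I_n) : seq ('I_n * 'I_n) :=
  zip c (rot 1 c).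

Definition cycle_mean (R : realType) (n : nat) (r : 'I_n * 'I_n -> R)
  (c : seq 'I_n) : R :=
  (\sum_(e <- cycle_edges c) r e) / (size c)%:R.

(* lambda(r): minimum over all directed cycles of the mean weight
   (the set is finite and nonempty under the hypotheses, so inf = min) *)
Definition min_cycle_mean (R : realType) (n : nat) (E : {set 'I_n * 'I_n})
  (r : 'I_n * 'I_n -> R) : R :=
  inf [set cycle_mean r c | c in dcycle E].

Definition replace_coord (R : realType) (n : nat) (r : 'I_n * 'I_n -> R)
  (e0 : 'I_n * 'I_n) (x : R) : 'I_n * 'I_n -> R :=
  fun e => if e == e0 then x else r e.

(* f : R -> R is piecewise affine with at most N break points:
   there are points b_1 < ... < b_k, k <= N, such that f is affine on each of
   (-oo, b_1], [b_1, b_2], ..., [b_k, +oo). *)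
Definition piecewise_affine_at_most (R : realType) (N : nat) (f : R -> R) : Prop :=
  exists b : seq R,
    [/\ (size b <= N)%N, sorted <%R b &
      forall k : nat, (k <= size b)%N ->
        exists a c : R, forall x : R,
          ((k == 0)%N || (nth 0 b k.-1 <= x)) ->
          ((k == size b) || (x <= nth 0 b k)) ->
          f x = a * x + c].

(* Main.v *)
Require Import Defs.
From HB Require Import structures.
From mathcomp Require Import all_boot all_order all_algebra.
From mathcomp Require Import all_classical all_reals all_analysis.
From mathcomp Require Import ring lra zify.
Import Order.TTheory GRing.Theory Num.Theory.
Import numFieldNormedType.Exports.
Set Implicit Arguments. Unset Strict Implicit. Unset Printing Implicit Defensive.
Local Open Scope classical_set_scope.
Local Open Scope ring_scope.

Lemma argmin_seq (R : realType) (T : eqType) (F : T -> R) (s : seq T) :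
  s != [::] -> exists2 x, x \in s & forall y, y \in s -> F x <= F y.
Proof.
elim: s => // a s IH _; case: s IH => [|b s] IH.
  by exists a; rewrite ?mem_seq1 // => y; rewrite mem_seq1 => /eqP->.
have [x xs Hx] := IH isT.
case: (leP (F a) (F x)) => h.
  exists a; first exact: mem_head.
  move=> y; rewrite inE => /orP[/eqP->//|/Hx]; exact: le_trans.
exists x; first by rewrite inE xs orbT.
by move=> y; rewrite inE => /orP[/eqP->|/Hx//]; exact: ltW.
Qed.

Definition inI (R : realType) (lo hi : option R) (x : R) : bool :=
  (if lo is Some l then l <= x else true) && (if hi is Some h then x <= h else true).
Definition inS (R : realType) (lo hi : option R) (x : R) : bool :=
  (if lo is Some l then l < x else true) && (if hi is Some h then x < h else true).

Lemma inS_inI (R : realType) lo hi (x : R) : inS lo hi x -> inI lo hi x.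
Proof. by case: lo hi => [l|] [h|] //= /andP[] *; apply/andP; split=> //; apply: ltW. Qed.

Lemma inS_of (R : realType) (lo hi : option R) u v z :
  inI lo hi u -> inI lo hi v -> u <= z -> z <= v ->
  (u < z \/ inS lo hi u) -> (z < v \/ inS lo hi v) -> inS lo hi z.
Proof.
case: lo hi => [l|] [h|] /=; rewrite ?andbT ?andTb;
  try (move=> /andP[? ?] /andP[? ?] ? ? [?|/andP[? ?]] [?|/andP[? ?]]; apply/andP; split; lra);
  try (move=> ? ? ? ? [?|?] [?|?]; lra).
Qed.

Lemma interval_affine (R : realType) (P : seq (R * R)) (f : R -> R) (B : seq R)
  (lo hi : option R) :
  (forall x, exists2 p, p \in P & f x = p.1 * x + p.2) ->
  (forall x p, p \in P -> f x <= p.1 * x + p.2) ->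
  (forall q p y, q \in P -> p \in P -> q.1 < p.1 ->
     (forall p', p' \in P -> q.1 * y + q.2 <= p'.1 * y + p'.2) ->
     exists2 b, b \in B & q.1 * b + q.2 <= p.1 * b + p.2 /\ b <= y) ->
  (forall l h, lo = Some l -> hi = Some h -> l < h) ->
  (forall b, b \in B -> ~~ inS lo hi b) ->
  exists a c, forall x, inI lo hi x -> f x = a * x + c.
Proof.
move=> fmin1 fmin2 HB lohi noB.
have [x0 Sx0] : exists x0, inS lo hi x0.
  clear -lohi; case: lo hi lohi => [l|] [h|] lohi.
  - exists ((l + h) / 2); have := lohi _ _ erefl erefl => lh.
    rewrite /inS /=; apply/andP; split; lra.
  - by exists (l + 1); rewrite /inS /= andbT; lra.
  - by exists (h - 1); rewrite /inS /=; lra.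
  - by exists 0.
have Ix0 := inS_inI Sx0.
have [p0 p0P fp0] := fmin1 x0.
have : [seq p <- P | f x0 == p.1 * x0 + p.2] != [::].
  by apply/eqP => /(congr1 (fun s => p0 \in s)); rewrite mem_filter fp0 eqxx p0P.
case/(argmin_seq (fun p : R * R => p.1)) => p; rewrite mem_filter => /andP[/eqP fp pP] pmin.
have actx0 : forall p', p' \in P -> p.1 * x0 + p.2 <= p'.1 * x0 + p'.2.
  by move=> p' p'P; rewrite -fp; apply: fmin2.
have actS : forall y, inS lo hi y -> forall p', p' \in P ->
    p.1 * y + p.2 <= p'.1 * y + p'.2.
  move=> y Sy p' p'P; rewrite real_leNgt ?num_real //; apply/negP => hp'.
  have [q qP fq] := fmin1 y.
  have qle : forall p'', p'' \in P -> q.1 * y + q.2 <= p''.1 * y + p''.2.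
    by move=> p'' p''P; rewrite -fq; apply: fmin2.
  have qlt : q.1 * y + q.2 < p.1 * y + p.2 by apply: le_lt_trans (qle _ p'P) hp'.
  have qx0 := actx0 _ qP.
  case: (ltgtP y x0) => yx0.
  -
    have pq : p.1 < q.1.
      rewrite real_ltNge ?num_real //; apply/negP => qp.
      have : (q.1 - p.1) * (x0 - y) <= 0 by rewrite mulr_le0_ge0 // ?subr_le0 ?subr_ge0 // ltW.
      nra.
    have [b bB [hb1 hb2]] := HB p q x0 pP qP pq actx0.
    have yb : y < b.
      rewrite real_ltNge ?num_real //; apply/negP => by'.
      have : (p.1 - q.1) * (b - y) >= 0 by rewrite mulr_le0 // ?subr_le0 // ltW.
      nra.
    move: (noB _ bB); rewrite (inS_of (inS_inI Sy) Ix0 (ltW yb) hb2) //; [by left|by right].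
  -
    have qp : q.1 < p.1.
      rewrite real_ltNge ?num_real //; apply/negP => pq.
      have : (q.1 - p.1) * (y - x0) >= 0 by rewrite mulr_ge0 // ?subr_ge0 // ltW.
      nra.
    have qx0' : p.1 * x0 + p.2 < q.1 * x0 + q.2.
      rewrite lt_neqAle qx0 andbT; apply/negP => /eqP e.
      have : p.1 <= q.1 by apply: pmin; rewrite mem_filter qP -e fp eqxx.
      by rewrite leNgt qp.
    have [b bB [hb1 hb2]] := HB q p y qP pP qp qle.
    have xb : x0 < b.
      rewrite real_ltNge ?num_real //; apply/negP => bx.
      have : (q.1 - p.1) * (b - x0) >= 0 by rewrite mulr_le0 // ?subr_le0 // ltW.
      nra.
    move: (noB _ bB); rewrite (inS_of Ix0 (inS_inI Sy) (ltW xb) hb2) //; [by left|by right].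
  - by move: hp'; rewrite yx0 ltNge actx0.
have actI : forall y, inI lo hi y -> forall p', p' \in P ->
    p.1 * y + p.2 <= p'.1 * y + p'.2.
  move=> y Iy p' p'P; rewrite real_leNgt ?num_real //; apply/negP => hp'.
  pose hy := p.1 * y + p.2 - (p'.1 * y + p'.2).
  pose hx := p.1 * x0 + p.2 - (p'.1 * x0 + p'.2).
  have hy0 : 0 < hy by rewrite /hy subr_gt0.
  have hx0 : hx <= 0 by rewrite /hx subr_le0 actx0.
  pose D := hy - hx.
  have D0 : 0 < D by rewrite /D; lra.
  pose th := hy / (2 * D).
  have th0 : 0 < th by rewrite /th divr_gt0 // mulr_gt0.
  have th1 : th < 1.
    by rewrite /th ltr_pdivrMr ?mulr_gt0 // mul1r /D; lra.
  pose z := y + th * (x0 - y).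
  have hz : p'.1 * z + p'.2 < p.1 * z + p.2.
    have e : p.1 * z + p.2 - (p'.1 * z + p'.2) = hy - th * D.
      by rewrite /z /D /hy /hx; ring.
    have e2 : th * D = hy / 2.
      by rewrite /th; field; rewrite lt0r_neq0.
    move: e; rewrite e2 => e; lra.
  have Sz : inS lo hi z.
    case: (ltgtP y x0) => yx0.
    - apply: (inS_of Iy Ix0); [ | | left | right ] => //; rewrite /z.
      + have : 0 <= th * (x0 - y) by rewrite mulr_ge0 // ?subr_ge0 ltW.
        lra.
      + have : th * (x0 - y) <= x0 - y by rewrite ler_piMl // ?subr_ge0 ?ltW.
        lra.
      + have : 0 < th * (x0 - y) by rewrite mulr_gt0 // subr_gt0.
        lra.
    - apply: (inS_of Ix0 Iy); [ | | right | left ] => //; rewrite /z.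
      + have : th * (y - x0) <= y - x0 by rewrite ler_piMl // ?subr_ge0 ?ltW.
        have -> : th * (x0 - y) = - (th * (y - x0)) by ring.
        lra.
      + have : 0 <= th * (y - x0) by rewrite mulr_ge0 // ?subr_ge0 ltW.
        have -> : th * (x0 - y) = - (th * (y - x0)) by ring.
        lra.
      + have : 0 < th * (y - x0) by rewrite mulr_gt0 // subr_gt0.
        have -> : th * (x0 - y) = - (th * (y - x0)) by ring.
        lra.
    - by move: hp'; rewrite yx0 ltNge actx0.
  by move: hz; rewrite ltNge actS.
exists p.1, p.2 => x Ix; apply/le_anti; rewrite fmin2 //=.
have [q qP ->] := fmin1 x; exact: actI.
Qed.

Definition Good (R : realType) (P : seq (R * R)) (s b : R) : Prop :=
  forall q, q \in P -> q.1 = s -> (forall p', p' \in P -> p'.1 = s -> q.2 <= p'.2) ->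
  (forall p', p' \in P -> s < p'.1 -> q.1 * b + q.2 <= p'.1 * b + p'.2) /\
  (exists2 p'', p'' \in P & s < p''.1 /\ q.1 * b + q.2 = p''.1 * b + p''.2).

Lemma good_ex (R : realType) (P : seq (R * R)) s :
  has (fun p => s < p.1) P -> exists b, Good P s b.
Proof.
move=> hl.
case hs: (has (fun p : R * R => p.1 == s) P); last first.
  exists 0 => q qP qs; move/hasPn: hs => /(_ q qP); by rewrite qs eqxx.
have : [seq p <- P | p.1 == s] != [::].
  by move: hs; rewrite has_filter.
case/(argmin_seq (fun p : R * R => p.2)) => q0; rewrite mem_filter => /andP[/eqP q0s q0P] q0min.
have : [seq p <- P | s < p.1] != [::] by move: hl; rewrite has_filter.
case/(argmin_seq (fun p : R * R => - ((q0.2 - p.2) / (p.1 - s)))) => ps.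
rewrite mem_filter => /andP[sps psP] psmax.
exists ((q0.2 - ps.2) / (ps.1 - s)) => -[a c] qP /= qs qmin; rewrite qs in qP *.
have q2 : c = q0.2.
  apply/le_anti/andP; split; first exact: qmin.
  by apply: (q0min (s, c)); rewrite mem_filter qP /= eqxx.
have ps0 : ps.1 - s != 0 by rewrite subr_eq0 gt_eqF.
rewrite q2; split.
  move=> p' p'P sp'.
  have := psmax p'; rewrite mem_filter sp' p'P lerN2 => /(_ isT).
  rewrite ler_pdivrMr ?subr_gt0 // => h.
  set b := _ / _ in h *. nra.
exists ps => //; split => //.
by field.
Qed.

Lemma B_ex (R : realType) (P : seq (R * R)) (L : seq R) :
  exists B : seq R, (size B <= count (fun s : R => has (fun p : R * R => (s < p.1)%R) P) L)%N /\
    forall s : R, s \in L -> has (fun p : R * R => s < p.1) P -> exists2 b, b \in B & Good P s b.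
Proof.
elim: L => [|s L [B [hB1 hB2]]]; first by exists [::].
case hs: (has (fun p : R * R => s < p.1) P).
  have [b hb] := good_ex hs.
  exists (b :: B); split; first by rewrite /= hs.
  move=> s'; rewrite inE => /orP[/eqP-> _|s'L h]; first by exists b; rewrite ?mem_head.
  by have [b' ? ?] := hB2 s' s'L h; exists b' => //; rewrite inE; apply/orP; right.
exists B; split; first by rewrite /= hs.
move=> s'; rewrite inE => /orP[/eqP->|s'L h]; first by rewrite hs.
exact: hB2.
Qed.

Lemma pw_core (R : realType) (N : nat) (P : seq (R * R)) (f : R -> R) :
  P != [::] ->
  (forall x, exists2 p, p \in P & f x = p.1 * x + p.2) ->
  (forall x p, p \in P -> f x <= p.1 * x + p.2) ->
  (size (undup (map fst P)) <= N.+1)%N ->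
  piecewise_affine_at_most N f.
Proof.
move=> P0 fmin1 fmin2 hS.
pose L := undup (map fst P).
have [B [hB1 hB2]] := B_ex P L.
have szB : (size B <= N)%N.
  apply: leq_trans hB1 _; rewrite -ltnS; apply: leq_trans hS.
  have [pm pmP pmmax] := argmin_seq (fun p : R * R => - p.1) P0.
  rewrite -[size L](count_predC (fun s : R => has (fun p : R * R => (s < p.1)%R) P)).
  rewrite -addn1 leq_add2l -has_count; apply/hasP; exists pm.1.
    by rewrite mem_undup; apply: map_f.
  rewrite /=; apply/hasPn => p pP /=.
  by rewrite -leNgt; have := pmmax p pP; rewrite lerN2.
have HB : forall q p y, q \in P -> p \in P -> q.1 < p.1 ->
     (forall p', p' \in P -> q.1 * y + q.2 <= p'.1 * y + p'.2) ->
     exists2 b, b \in B & q.1 * b + q.2 <= p.1 * b + p.2 /\ b <= y.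
  move=> q p y qP pP qp qact.
  have qL : q.1 \in L by rewrite mem_undup; apply: map_f.
  have qh : has (fun p : R * R => q.1 < p.1) P by apply/hasP; exists p.
  have [b bB gb] := hB2 q.1 qL qh.
  have [|h1 [p'' p''P [h3 h4]]] := gb q qP erefl.
    by move=> p' p'P e; have := qact p' p'P; rewrite e; lra.
  exists b => //; split; first exact: h1.
  rewrite real_leNgt ?num_real //; apply/negP => yb.
  have := qact p'' p''P.
  have : 0 < (p''.1 - q.1) * (b - y) by rewrite mulr_gt0 // subr_gt0.
  nra.
pose b := sort <=%R (undup B).
have bsorted : sorted <=%R b by apply: sort_sorted; exact: le_total.
exists b; split.
- by rewrite size_sort; apply: leq_trans szB; exact: size_undup.
- by rewrite lt_sorted_uniq_le sort_uniq undup_uniq bsorted.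
move=> k hk.
pose lo := if k == 0%N then None else Some (nth 0 b k.-1).
pose hi := if k == size b then None else Some (nth 0 b k).
have lohi : forall l h, lo = Some l -> hi = Some h -> l < h.
  move=> l h; rewrite /lo /hi; case: ifP => // k0 [<-]; case: ifP => // kb [<-].
  apply: (sorted_ltn_nth lt_trans); rewrite ?lt_sorted_uniq_le ?sort_uniq ?undup_uniq ?bsorted //;
    rewrite ?inE /=; move/negbT: k0; move/negbT: kb; move: hk; rewrite -?subn1; move: (size b) => sb; lia.
have noB : forall beta, beta \in B -> ~~ inS lo hi beta.
  move=> beta betaB; rewrite /inS /lo /hi; apply/negP => /andP[h1 h2].
  have betab : beta \in b by rewrite mem_sort mem_undup.
  have mlt := betab; rewrite -index_mem in mlt.
  have nb := nth_index 0 betab.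
  move: (index beta b) mlt nb => m mlt nb.
  case: (ltnP m k) => mk.
  + have k0 : (k == 0%N) = false by apply/negbTE; lia.
    rewrite k0 in h1.
    have : nth 0 b m <= nth 0 b k.-1.
      by apply: (sorted_leq_nth le_trans lexx) => //; rewrite ?inE /= -?subn1; lia.
    by rewrite nb leNgt h1.
  + have kb : (k == size b) = false by apply/negbTE; move: mlt mk; move: (size b) => sb; lia.
    rewrite kb in h2.
    have : nth 0 b k <= nth 0 b m.
      by apply: (sorted_leq_nth le_trans lexx) => //; rewrite ?inE /=; move/negbT: kb; move: mlt mk hk; move: (size b) => sb; lia.
    by rewrite nb leNgt h2.
have [a [c hac]] := interval_affine fmin1 fmin2 HB lohi noB.
exists a, c => x h1 h2; apply: hac; rewrite /inI /lo /hi; move: h1 h2.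
by case: (k == 0%N); case: (k == size b) => /= h1 h2; rewrite ?h1 ?h2.
Qed.

Lemma lip_cont (R : realType) (P : seq (R * R)) (f : R -> R) :
  (forall x, exists2 p, p \in P & f x = p.1 * x + p.2) ->
  (forall x p, p \in P -> f x <= p.1 * x + p.2) ->
  (forall p, p \in P -> 0 <= p.1 <= 1) -> continuous f.
Proof.
move=> fmin1 fmin2 hs.
have lip : forall x y, `|f x - f y| <= `|x - y|.
  move=> x y; have [p pP fp] := fmin1 x; have [q qP fq] := fmin1 y.
  have h1 := fmin2 x q qP; have h2 := fmin2 y p pP.
  have /andP[p0 p1] := hs p pP; have /andP[q0 q1] := hs q qP.
  rewrite ler_norml; case: (leP x y) => xy.
  - rewrite ler0_norm ?subr_le0 //; apply/andP; split; nra.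
  - rewrite gtr0_norm ?subr_gt0 //; apply/andP; split; nra.
move=> x; apply/cvgrPdist_lt => e e0.
near=> y.
apply: le_lt_trans (lip x y) _.
near: y; apply: (@cvgr_dist_lt _ R _ (nbhs x) _ (fun y : R => y)) => //.

Unshelve. all: by end_near.
Qed.

Lemma sum_replace (R : realType) n (r : 'I_n * 'I_n -> R) e0 x (s : seq ('I_n * 'I_n)) :
  \sum_(e <- s) replace_coord r e0 x e = x * (count_mem e0 s)%:R + \sum_(e <- s | e != e0) r e.
Proof.
elim: s => [|e s IH]; first by rewrite !big_nil mulr0 addr0.
rewrite !big_cons IH /replace_coord /=.
case: (eqVneq e e0) => [->|ne] /=; rewrite ?eqxx /=.
  by rewrite add1n -addn1 natrD; ring.
by rewrite add0n; ring.
Qed.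

Lemma edges_uniq n (c : seq 'I_n) : uniq c -> uniq (cycle_edges c).
Proof.
move=> uc; apply: (@map_uniq _ _ fst).
by rewrite /cycle_edges -/(unzip1 _) unzip1_zip // size_rot.
Qed.

Definition allseqs (n : nat) : seq (seq 'I_n) :=
  flatten [seq [seq tval t | t <- enum {: k.-tuple 'I_n}] | k <- iota 0 n.+1].

Lemma mem_allseqs n (c : seq 'I_n) : uniq c -> c \in allseqs n.
Proof.
move=> uc.
have sc : (size c <= n)%N.
  have := uniq_leq_size uc (fun x _ => mem_enum 'I_n x).
  by rewrite size_enum_ord.
apply/flattenP; exists [seq tval t | t <- enum {: (size c).-tuple 'I_n}].
  by apply/mapP; exists (size c) => //; rewrite mem_iota.
by apply/mapP; exists (in_tuple c); rewrite ?mem_enum.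
Qed.

Unset Implicit Arguments.
Theorem mainTheorem2 (R : realType) (n : nat) (E : {set 'I_n * 'I_n})
  (out_edge : forall u : 'I_n, exists v : 'I_n, (u, v) \in E)
  (has_cycle : exists c : seq 'I_n, dcycle E c)
  (i j : 'I_n) (hij : (i, j) \in E) (r : 'I_n * 'I_n -> R) :
  let f := fun x : R => min_cycle_mean E (replace_coord r (i, j) x) in
  continuous (f : R -> R) /\ piecewise_affine_at_most n f.
Proof.
move=> f.
pose e0 := (i, j).
pose dcb (c : seq 'I_n) := [&& c != [::], uniq c & cycle (fun u v => (u, v) \in E) c].
have dcP : forall c, dcycle E c <-> dcb c.
  by move=> c; split => [[? ? ?]|/and3P[? ? ?]]; [apply/and3P|]; split.
pose L := [seq c <- allseqs n | dcb c].
have Lall : forall c, dcycle E c -> c \in L.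
  move=> c /dcP dc; rewrite mem_filter dc mem_allseqs //.
  by case/and3P: dc.
have LP : forall c, c \in L -> dcycle E c.
  by move=> c; rewrite mem_filter => /andP[/dcP].
pose sl (c : seq 'I_n) : R := (count_mem e0 (cycle_edges c))%:R / (size c)%:R.
pose ic (c : seq 'I_n) : R := (\sum_(e <- cycle_edges c | e != e0) r e) / (size c)%:R.
have meanE : forall x c, cycle_mean (replace_coord r e0 x) c = sl c * x + ic c.
  move=> x c; rewrite /cycle_mean sum_replace /sl /ic; ring.
have [c0 c0d] := has_cycle.
have L0 : L != [::].
  by apply/eqP => L0; have := Lall _ c0d; rewrite L0.
have fmin : forall x, exists2 c, c \in L &
    f x = sl c * x + ic c /\ forall c', c' \in L -> sl c * x + ic c <= sl c' * x + ic c'.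
  move=> x; have [c cL cmin] := argmin_seq (fun c => sl c * x + ic c) L0.
  exists c => //; split => //.
  rewrite /f /min_cycle_mean; apply/le_anti/andP; split.
    apply: ge_inf; last by exists c; [exact: LP | rewrite meanE].
    exists (sl c * x + ic c) => y [c' /Lall c'L <-]; rewrite meanE; exact: cmin.
  apply: lb_le_inf; first by exists (sl c * x + ic c); exists c; [exact: LP | rewrite meanE].
  move=> y [c' /Lall c'L <-]; rewrite meanE; exact: cmin.
pose P := [seq (sl c, ic c) | c <- L].
have fmin1 : forall x, exists2 p, p \in P & f x = p.1 * x + p.2.
  move=> x; have [c cL [fc _]] := fmin x; exists (sl c, ic c) => //.
  by apply/mapP; exists c.
have fmin2 : forall x p, p \in P -> f x <= p.1 * x + p.2.
  move=> x p /mapP[c' c'L ->] /=; have [c cL [-> cm]] := fmin x; exact: cm.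
have slope : forall c, c \in L -> sl c = 0 \/ exists2 k, (k < n)%N & sl c = (k.+1)%:R^-1.
  move=> c /LP [cne uc _].
  rewrite /sl count_uniq_mem ?edges_uniq //.
  case: (e0 \in cycle_edges c); last by left; rewrite mul0r.
  right; exists (size c).-1.
    have := uniq_leq_size uc (fun x _ => mem_enum 'I_n x).
    rewrite size_enum_ord => sc.
    have hp : (0 < size c)%N by rewrite lt0n size_eq0.
    by rewrite -subn1; move: sc hp; move: (size c) => m; lia.
  by rewrite prednK ?mul1r // lt0n size_eq0.
have slope01 : forall p, p \in P -> 0 <= p.1 <= 1.
  move=> p /mapP[c cL ->] /=; case: (slope c cL) => [->|[k _ ->]]; first by rewrite lexx ler01.
  by rewrite invr_ge0 ler0n /= invf_le1 // ?ler1n // ltr0n.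
split; first exact: lip_cont fmin1 fmin2 slope01.
apply: (pw_core (P := P)) => //.
- by rewrite -size_eq0 size_map size_eq0.
pose S := (0 : R) :: [seq (k.+1)%:R^-1 | k <- iota 0 n].
have -> : n.+1 = size S by rewrite /= size_map size_iota.
apply: uniq_leq_size; first exact: undup_uniq.
move=> s; rewrite mem_undup => /mapP[p pP ->].
move: pP => /mapP[c cL ->] /=; rewrite inE.
case: (slope c cL) => [->|[k kn ->]]; first by rewrite eqxx.
by apply/orP; right; apply/mapP; exists k; rewrite // mem_iota.
Qed.
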